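(* Let $n$ be even and $1\le k\le n/2$, and define $$\mathcal C_4(n,k)=\{0^k1\vec c1:\ \vec c\in\{0,1\}^{n-k-2},\ w_H(\vec c)=\tfrac n2-2,\ \vec c\text{ has no run of }k\text{ consecutive zeros}\}.$$ Then $\mathcal C_4(n,k)$ is a balanced MU code. Moreover, for a fixed integer $a\ge1$, as $n\to\infty$ over powers of $2$, $$\liminf_{n\to\infty}\ \frac{|\mathcal C_4(n,\log_2 n+a)|}{\frac{2^n}{n\sqrt n}}\ \ge\ \frac{2^a-1}{2^{2a+1}\sqrt{2\pi}}.$$
   Context: Binary alphabet; $w_H$ is Hamming weight. A binary word of even length $n$ is balanced if its Hamming weight is $n/2$. A code $\mathcal C\subseteq\{0,1\}^n$ is mutually uncorrelated (MU) if for any two not necessarily distinct codewords $\vec a,\vec b$, no proper nonempty prefix of $\vec a$ equals a suffix of $\vec b$ of the same length; a balanced MU code is an MU code whose codewords are all balanced. *)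

(* Defs.v *)
From mathcomp Require Import all_boot.
Set Implicit Arguments. Unset Strict Implicit. Unset Printing Implicit Defensive.

(* Binary words are sequences of booleans (true = 1, false = 0). *)

Definition wH (w : seq bool) : nat := count id w.

Definition balanced (n : nat) (w : seq bool) : bool := wH w == n./2.

Definition MU (n : nat) (C : {set n.-tuple bool}) : Prop :=
  forall a b : n.-tuple bool, a \in C -> b \in C ->
  forall i : nat, 0 < i < n -> take i (val a) <> drop (n - i) (val b).

Definition balanced_MU (n : nat) (C : {set n.-tuple bool}) : Prop :=
  MU C /\ (forall a : n.-tuple bool, a \in C -> balanced n (val a)).

Definition has_zero_run (k : nat) (c : seq bool) : bool :=
  infix (nseq k false) c.

Definition C4 (n k : nat) : {set n.-tuple bool} :=
  [set w : n.-tuple bool |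
     [exists c : (n - k - 2).-tuple bool,
        [&& val w == nseq k false ++ true :: (val c ++ [:: true]),
            wH (val c) == n./2 - 2
          & ~~ has_zero_run k (val c)]]].

(* Main.v *)
Require Import Defs.
From mathcomp Require Import all_boot zify.

Lemma expn_pow a b : Nat.pow a b = expn a b.
Proof. elim: b => //= b IH. by rewrite expnS -IH. Qed.

Definition W k (c : seq bool) := nseq k false ++ true :: (c ++ [:: true]).

Lemma nthW k c j : nth false (W k c) j =
  if j < k then false else if j == k then true
  else if j - k.+1 < size c then nth false c (j - k.+1) else (j - k.+1 - size c == 0).
Proof.
rewrite /W nth_cat size_nseq nth_nseq.
case: ltnP => // H. case: eqVneq => [->|Hne]; first by rewrite subnn.
have -> : j - k = (j - k.+1).+1 by lia.
rewrite /= nth_cat. case: ltnP => // H2.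
by case: (j - k.+1 - size c) => //= m; rewrite nth_nil.
Qed.

Lemma memC4 n k (a : n.-tuple bool) : a \in C4 n k ->
  exists c : seq bool, [/\ val a = W k c, size c = n - k - 2, wH c = n./2 - 2
                       & ~~ has_zero_run k c].
Proof.
rewrite inE => /existsP [c /and3P [/eqP H1 /eqP H2 H3]].
by exists (val c); rewrite size_tuple.
Qed.

Lemma part1 : forall n k : nat, ~~ odd n -> (1 <= k)%N -> (k <= n./2)%N ->
     balanced_MU (C4 n k).
Proof.
move=> n k Hodd Hk1 Hk2; split.
- move=> a b /memC4 [c [Ha Hc _ _]] /memC4 [c' [Hb Hc' _ Hrun]] i /andP [Hi0 Hin] Heq.
  have sa := size_tuple a; have sb := size_tuple b.
  have Hsz : size (W k c) = k + 2 + size c by rewrite /W size_cat size_nseq /= size_cat /=; lia.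
  have Hsz' : size (W k c') = k + 2 + size c' by rewrite /W size_cat size_nseq /= size_cat /=; lia.
  rewrite Ha in sa; rewrite Hb in sb.
  have key : forall j, j < i -> nth false (W k c) j = nth false (W k c') (n - i + j).
    move=> j Hj. by rewrite -(nth_take false Hj) -Ha Heq Hb nth_drop.
  case: (leqP i k) => Hik.
  + have := key i.-1 ltac:(lia). rewrite !nthW.
    have -> : i.-1 < k by lia.
    have -> : n - i + i.-1 < k = false by lia.
    have -> : (n - i + i.-1 == k) = false by apply/eqP; lia.
    have -> : n - i + i.-1 - k.+1 < size c' = false by lia.
    by have -> : n - i + i.-1 - k.+1 - size c' = 0 by lia.
  + case: (leqP (n - i) k) => Hp.
    * have := key (k - (n - i)) ltac:(lia). rewrite !nthW.
      have -> : k - (n - i) < k by lia.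
      have -> : n - i + (k - (n - i)) < k = false by lia.
      by have -> : (n - i + (k - (n - i)) == k) by apply/eqP; lia.
    * suff : has_zero_run k c' by rewrite (negbTE Hrun).
      have E : take k (drop (n - i - k.+1) c') = nseq k false.
        apply: (eq_from_nth (x0 := false)).
          rewrite size_take size_drop size_nseq; case: ltnP => //; lia.
        move=> j; rewrite size_take size_drop => Hj.
        have Hj' : j < k by apply: (leq_trans Hj); case: ifP => // /negbT; rewrite -leqNgt.
        rewrite nth_take // nth_drop nth_nseq Hj'.
        have := key j ltac:(lia). rewrite !nthW Hj'.
        have -> : n - i + j < k = false by lia.
        have -> : (n - i + j == k) = false by apply/eqP; lia.
        have -> : n - i + j - k.+1 < size c' by lia.
        by have -> : n - i + j - k.+1 = (n - i - k.+1) + j by lia.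
      rewrite /has_zero_run -E. apply: (infix_trans (infix_take _ _)). exact: infix_drop.
- move=> a /memC4 [c [Ha Hc Hw _]].
  have sa := size_tuple a. rewrite Ha /W size_cat size_nseq /= size_cat /= in sa.
  rewrite /balanced Ha /W /wH count_cat count_nseq /= count_cat /=.
  rewrite /wH in Hw; rewrite Hw mul0n.
  have Hn : n = n./2 + n./2 by rewrite -{1}(odd_double_half n) (negbTE Hodd) addnn.
  apply/eqP. lia.
Qed.

Fixpoint words (N w : nat) : seq (seq bool) :=
  match N with
  | 0 => if w is 0 then [:: [::]] else [::]
  | N'.+1 => (if w is w'.+1 then map (cons true) (words N' w') else [::])
             ++ map (cons false) (words N' w)
  end.

Lemma size_words N w : size (words N w) = 'C(N, w).
Proof.
elim: N w => [|N IH] [|w] /=; rewrite ?bin0n //.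
- by rewrite size_map IH !bin0.
- by rewrite size_cat !size_map !IH binS addnC.
Qed.

Lemma mem_words N w x : x \in words N w -> size x = N /\ wH x = w.
Proof.
elim: N w x => [|N IH] [|w] x //=.
- by rewrite inE => /eqP ->.
- by move=> /mapP [y /IH [H1 H2] ->]; rewrite /wH /= -/(wH y) H1 H2.
- rewrite mem_cat => /orP [] /mapP [y /IH [H1 H2] ->]; by rewrite /wH /= -/(wH y) H1 H2.
Qed.

Lemma uniq_words N w : uniq (words N w).
Proof.
elim: N w => [|N IH] [|w] //=.
- by rewrite map_inj_uniq // => x y [].
- rewrite cat_uniq !map_inj_uniq ?IH //; try by move=> x y [].
  rewrite andbT /=. apply/hasPn => x /mapP [y _ ->]. apply/negP => /mapP [z _]. done.
Qed.

Lemma pref_count k N w : k <= N ->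
  count (prefix (nseq k false)) (words N w) = 'C(N - k, w).
Proof.
elim: k N w => [|k IH] N w.
- move=> _. rewrite subn0 -size_words. apply/eqP; rewrite -all_count. by apply/allP => x _; exact: prefix0s.
- case: N => [|N] HkN //. rewrite subSS -(IH N w HkN).
  case: w => [|w] /=; rewrite ?count_cat !count_map.
  + by apply: eq_count => x /=.
  + rewrite (@eq_count _ _ pred0); last by move=> x.
    rewrite count_pred0 add0n. by apply: eq_count => x /=.
Qed.

Lemma hz_true k x : 0 < k -> has_zero_run k (true :: x) = has_zero_run k x.
Proof. by case: k => // k _; rewrite /has_zero_run infix_consl /=. Qed.

Lemma hz_false k x : has_zero_run k.+1 (false :: x) =
   prefix (nseq k false) x || has_zero_run k.+1 x.
Proof. by rewrite /has_zero_run infix_consl /=. Qed.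

Lemma count_or (T : Type) (a b : pred T) s :
  count (fun x => a x || b x) s <= count a s + count b s.
Proof. elim: s => //= x s IH; case: (a x); case: (b x) => /=; lia. Qed.

Lemma bad_small k N w : N < k -> count (has_zero_run k) (words N w) = 0.
Proof.
move=> H. rewrite (@eq_in_count _ _ pred0) ?count_pred0 // => x /mem_words [Hs _] /=.
apply/negP => /size_infix; rewrite size_nseq; lia.
Qed.

Lemma bad_count k N w : 0 < k ->
  count (has_zero_run k) (words N w) <= (N.+1 - k) * 'C(N - k, w).
Proof.
case: k => // k _. elim: N w => [|N IH] w.
- by rewrite bad_small.
- case: (ltnP N k) => HNk; first by rewrite bad_small.
  have E1 : count (has_zero_run k.+1) (words N.+1 w) <=
     (if w is v.+1 then count (has_zero_run k.+1) (words N v) else 0)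
     + (count (prefix (nseq k false)) (words N w) + count (has_zero_run k.+1) (words N w)).
    case: w => [|v] /=; rewrite ?count_cat !count_map.
    + rewrite add0n (@eq_count _ _ (fun x => prefix (nseq k false) x || has_zero_run k.+1 x)); last by move=> x; rewrite /preim /= hz_false.
      exact: count_or.
    + rewrite (@eq_count _ _ (has_zero_run k.+1)); last by move=> x; rewrite /preim /= hz_true.
      rewrite leq_add2l (@eq_count _ _ (fun x => prefix (nseq k false) x || has_zero_run k.+1 x)); last by move=> x; rewrite /preim /= hz_false.
      exact: count_or.
  apply: (leq_trans E1). rewrite pref_count //.
  case: w E1 => [|v] _.
  + have := IH 0. rewrite !bin0. lia.
  + have H1 := IH v. have H2 := IH v.+1.
    have [j Ej] : exists j, N - k = j by eexists.
    have -> : N.+2 - k.+1 = j.+1 by lia.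
    have -> : N.+1 - k.+1 = j by lia.
    rewrite Ej. rewrite (_ : N.+1 - k.+1 = j) in H1 H2; last by lia.
    case: j Ej H1 H2 => [|i] Ej H1 H2.
    * rewrite !mul0n in H1 H2. rewrite mul1n. lia.
    * rewrite (_ : N - k.+1 = i) in H1 H2; last by lia.
      rewrite binS. set x := 'C(i, v) in H1 *. set y := 'C(i, v.+1) in H2 *. nia.
Qed.

Lemma W_inj k : injective (W k).
Proof.
move=> c c' /eqP; rewrite /W eqseq_cat ?size_nseq // eqxx /= eqseq_cons /= => /eqP.
by rewrite !cats1 => /rcons_inj [].
Qed.

Lemma card_C4 n k : 0 < k -> k + 2 <= n ->
  'C(n - k - 2, n./2 - 2) - ((n - k - 2).+1 - k) * 'C(n - k - 2 - k, n./2 - 2)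
  <= #|C4 n k|.
Proof.
move=> Hk Hn.
set N := n - k - 2. set w := n./2 - 2.
set s := map (W k) (filter (predC (has_zero_run k)) (words N w)).
have Hs : size s = 'C(N, w) - count (has_zero_run k) (words N w).
  rewrite size_map size_filter -size_words -(count_predC (has_zero_run k)). lia.
have Hu : uniq s by rewrite map_inj_uniq ?filter_uniq ?uniq_words //; exact: W_inj.
have Hsub : {subset s <= map val (enum (C4 n k))}.
  move=> x /mapP [c]. rewrite mem_filter => /andP [Hc /mem_words [Hsz Hw]] ->.
  have Hsw : size (W k c) == n by rewrite /W size_cat size_nseq /= size_cat /= Hsz; apply/eqP; lia.
  have Hsc : size c == N by rewrite Hsz.
  have -> : W k c = val (Tuple Hsw) by [].
  apply: map_f. rewrite mem_enum inE. apply/existsP; exists (Tuple Hsc).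
  by rewrite /= eqxx Hw eqxx.
have := uniq_leq_size Hu Hsub. rewrite Hs size_map cardE.
move=> H; apply: leq_trans H. rewrite leq_sub2l //. exact: bad_count.
Qed.

Lemma bin_double M w : M.+1 <= 2 * w -> 2 * 'C(M, w) <= 'C(M.+1, w).
Proof.
move=> H. have E := mul_bin_down M.+1 w. rewrite /= in E.
have : 2 * (M.+1 * 'C(M, w)) <= M.+1 * 'C(M.+1, w).
  rewrite E mulnA leq_mul2r; apply/orP; right; lia.
rewrite mulnCA leq_pmul2l //.
Qed.

Lemma bin_pow t M w : M + t <= 2 * w -> 'C(M, w) * expn 2 t <= 'C(M + t, w).
Proof.
elim: t => [|t IH] H; first by rewrite addn0 expn0 muln1.
rewrite expnS mulnCA addnS. apply: (leq_trans _ (bin_double (M + t) w _)); last lia.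
rewrite leq_mul2l IH ?orbT //; lia.
Qed.

Lemma cube j : 10 <= j -> j * j * j <= expn 2 j.
Proof.
elim: j => // j IH. rewrite leq_eqVlt => /orP [/eqP <- //|H].
have := IH H. rewrite expnS. nia.
Qed.


From Stdlib Require Import Reals Lra Lia.
From Coquelicot Require Import Coquelicot.


Definition I (n : nat) : R := RInt (fun x => sin x ^ n) 0 (PI/2).

Lemma cont_sinpow n (x : R) : continuous (fun x => sin x ^ n) x.
Proof. apply continuity_pt_filterlim. apply derivable_continuous_pt. reg. Qed.

Lemma ex_I n : ex_RInt (fun x => sin x ^ n) 0 (PI/2).
Proof. apply (@ex_RInt_continuous R_CompleteNormedModule); intros z _; apply cont_sinpow. Qed.

Lemma I_rec p : INR p.+2 * I p.+2 = INR p.+1 * I p.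
Proof.
have H := @is_RInt_derive R_CompleteNormedModule (fun x => - cos x * sin x ^ p.+1)
   (fun x => INR p.+2 * sin x ^ p.+2 - INR p.+1 * sin x ^ p) 0 (PI/2).
have H1 : forall x, Rmin 0 (PI/2) <= x <= Rmax 0 (PI/2) -> is_derive (fun x => - cos x * sin x ^ p.+1) x (INR p.+2 * sin x ^ p.+2 - INR p.+1 * sin x ^ p).
  move=> x _. auto_derive; first done.
  rewrite -/(INR p.+1) !S_INR /=.
  have Hc : cos x * cos x = 1 - sin x * sin x by have := sin2_cos2 x; rewrite /Rsqr; lra.
  have E : - cos x * (1 * cos x * ((INR p + 1) * sin x ^ p)) = - (cos x * cos x) * ((INR p + 1) * sin x ^ p).
    ring.
  rewrite E Hc. ring.
have H2 : forall x, Rmin 0 (PI/2) <= x <= Rmax 0 (PI/2) -> continuous (fun x => INR p.+2 * sin x ^ p.+2 - INR p.+1 * sin x ^ p) x.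
  move=> x _. apply continuity_pt_filterlim. apply derivable_continuous_pt. reg.
have {H H1 H2} H := H H1 H2.
have Ha : - cos (PI/2) * sin (PI/2) ^ p.+1 = 0 by rewrite cos_PI2; ring.
have Hb : - cos 0 * sin 0 ^ p.+1 = 0 by rewrite sin_0 pow_i; [ring | lia].
rewrite Ha Hb minus_eq_zero in H.
have E1 := is_RInt_unique _ _ _ _ H.
have E2 : RInt (fun x => INR p.+2 * sin x ^ p.+2 - INR p.+1 * sin x ^ p) 0 (PI/2)
   = INR p.+2 * I p.+2 - INR p.+1 * I p.
  have R1 := @RInt_scal R_CompleteNormedModule (fun x => sin x ^ p.+2) 0 (PI/2) (INR p.+2) (ex_I _).
  have R2 := @RInt_scal R_CompleteNormedModule (fun x => sin x ^ p) 0 (PI/2) (INR p.+1) (ex_I _).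
  have R3 := @RInt_minus R_CompleteNormedModule (fun x => scal (INR p.+2) (sin x ^ p.+2)) (fun x => scal (INR p.+1) (sin x ^ p)) 0 (PI/2) (ex_RInt_scal _ _ _ _ (ex_I _)) (ex_RInt_scal _ _ _ _ (ex_I _)).
  rewrite R1 R2 in R3. exact R3.
rewrite E1 in E2. change zero with 0 in E2. lra.
Qed.

Lemma I0 : I 0 = PI/2.
Proof. rewrite /I /=. rewrite (@RInt_const R_CompleteNormedModule). rewrite /scal /= /mult /=. ring. Qed.

Lemma I1 : I 1 = 1.
Proof.
have H := @is_RInt_derive R_CompleteNormedModule (fun x => - cos x) (fun x => sin x ^ 1) 0 (PI/2).
have H1 : forall x, Rmin 0 (PI/2) <= x <= Rmax 0 (PI/2) -> is_derive (fun x => - cos x) x (sin x ^ 1).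
  move=> x _. auto_derive; first done. ring.
have H2 : forall x, Rmin 0 (PI/2) <= x <= Rmax 0 (PI/2) -> continuous (fun x => sin x ^ 1) x.
  move=> x _. apply cont_sinpow.
have {H H1 H2} H := H H1 H2.
rewrite cos_PI2 cos_0 in H.
rewrite /I (is_RInt_unique _ _ _ _ H). rewrite /minus /plus /opp /=. ring.
Qed.

Lemma I_mono n : I n.+1 <= I n.
Proof.
apply RInt_le; try apply ex_I. have := PI_RGT_0; lra.
move=> x Hx. have Hs0 : 0 <= sin x by apply sin_ge_0; have := PI_RGT_0; lra.
have [_ Hs1] := SIN_bound x. have Hp := pow_le _ n Hs0. rewrite /=. nra.
Qed.

Lemma I_prod n : INR n.+1 * I n.+1 * I n = PI/2.
Proof.
elim: n => [|n IH]; first by rewrite I1 I0 /=; ring.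
rewrite I_rec -IH. ring.
Qed.

Lemma INR_muln a b : INR (a * b)%nat = INR a * INR b.
Proof. exact: mult_INR. Qed.
Lemma INR_addn a b : INR (a + b)%nat = INR a + INR b.
Proof. exact: plus_INR. Qed.
Lemma INR_expn a b : INR (expn a b) = INR a ^ b.
Proof. elim: b => [|b IH] //. rewrite expnS INR_muln IH /=. ring. Qed.

Lemma bin_central_rec m :
  (m.+1 * m.+1 * 'C((2 * m).+2, m.+1) = (2 * m).+2 * (2 * m).+1 * 'C(2 * m, m))%nat.
Proof.
have H1 := mul_bin_diag (2 * m).+2 m.
have H2 := mul_bin_down (2 * m).+1 m. rewrite /= in H1 H2.
have E : ((2 * m).+1 - m = m.+1)%nat by lia.
rewrite E in H2.
rewrite -mulnA -H1. nia.
Qed.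

Lemma I_even m : I (2 * m) * 4 ^ m = PI / 2 * INR 'C(2 * m, m).
Proof.
elim: m => [|m IH]; first by rewrite muln0 I0 bin0 /=; ring.
have -> : (2 * m.+1 = (2 * m).+2)%nat by lia.
have Hr := I_rec (2 * m).
have Hb := f_equal INR (bin_central_rec m).
rewrite !INR_muln in Hb.
have Hm : 0 <= INR m by apply pos_INR.
rewrite !S_INR INR_muln in Hr Hb. simpl INR in Hr, Hb.
have Hx : I (2 * m).+2 = (2 * INR m + 1) / (2 * INR m + 2) * I (2 * m).
  apply (Rmult_eq_reg_l (2 * INR m + 1 + 1)); last lra.
  rewrite Hr. field. lra.
have Hc : INR 'C((2 * m).+2, m.+1) = (2 * INR m + 2) * (2 * INR m + 1) / ((INR m + 1) * (INR m + 1)) * INR 'C(2 * m, m).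
  apply (Rmult_eq_reg_l ((INR m + 1) * (INR m + 1))); last nra.
  rewrite Hb. field. lra.
rewrite Hx Hc /=.
have -> : (2 * INR m + 1) / (2 * INR m + 2) * I (2 * m) * (4 * 4 ^ m) =
   4 * (2 * INR m + 1) / (2 * INR m + 2) * (I (2 * m) * 4 ^ m) by field; lra.
rewrite IH. field. lra.
Qed.

Lemma wallis m : 2 * 16 ^ m <= PI * (2 * INR m + 1) * INR 'C(2 * m, m) ^ 2.
Proof.
have Hp := I_prod (2 * m).
have Hmo := I_mono (2 * m).
have He := I_even m.
have HPI := PI_RGT_0.
have H4 : 0 < 4 ^ m by apply pow_lt; lra.
have Hy : I (2 * m) = PI / 2 * INR 'C(2 * m, m) / 4 ^ m by rewrite -He; field; lra.
have Hy0 : 0 <= I (2 * m) by rewrite Hy; apply Rmult_le_pos; [apply Rmult_le_pos; [lra|apply pos_INR] | apply Rlt_le, Rinv_0_lt_compat; lra].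
rewrite S_INR INR_muln /= in Hp.
have Hm : 0 <= INR m := pos_INR m.
have Hle : ((1+1)*INR m + 1) * I (2*m).+1 * I (2*m) <= ((1+1)*INR m+1) * I (2*m) * I (2*m).
  apply Rmult_le_compat_r => //; apply Rmult_le_compat_l; lra.
have Hq : PI / 2 <= (2 * INR m + 1) * I (2 * m) ^ 2.
  rewrite -Hp. have -> : I (2 * m) ^ 2 = I (2*m) * I (2*m) by ring. lra.
rewrite Hy in Hq.
have -> : 16 ^ m = 4 ^ m * 4 ^ m by rewrite -Rpow_mult_distr; f_equal; lra.
set C := INR 'C(2 * m, m) in Hq *. set F := 4 ^ m in Hq H4 *.
have Hq' : PI / 2 * (F * F) <= (2 * INR m + 1) * (PI / 2 * C) ^ 2.
  have -> : (2 * INR m + 1) * (PI / 2 * C) ^ 2 = (2 * INR m + 1) * (PI / 2 * C / F) ^ 2 * (F * F) by field; lra.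
  apply Rmult_le_compat_r; nra.
nra.
Qed.

Lemma bin_shift z d :
  ((z + d).+1 * 'C((2 * z + d).+1, (z + d).+1) = (2 * z + d).+1 * 'C(2 * z + d, z + d))%nat.
Proof. by rewrite -mul_bin_diag. Qed.

Lemma bin_shift_R z d : (1 <= z)%nat -> (d <= 2 * z)%nat ->
  2 ^ d * INR 'C(2 * z, z) * (1 - INR (d * d.+1) / (4 * INR z)) <= INR 'C(2 * z + d, z + d).
Proof.
move=> Hz. elim: d => [|d IH] Hd.
  rewrite !addn0 mul0n /= /Rdiv Rmult_0_l. lra.
have {IH} IH := IH ltac:(lia).
have HZ : 1 <= INR z by apply (le_INR 1); lia.
have HD : 0 <= INR d by apply pos_INR.
have HDZ : INR d + 1 <= 2 * INR z.
  have := le_INR _ _ (ssrnat.leP Hd). rewrite S_INR INR_muln /=. lra.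
have E := bin_shift z d.
have -> : (2 * z + d.+1 = (2 * z + d).+1)%nat by lia.
have -> : (z + d.+1 = (z + d).+1)%nat by lia.
move: E IH.
move: ('C((2 * z + d).+1, (z + d).+1)) ('C(2 * z + d, z + d)) ('C(2 * z, z)) => b1 b0 c0 E IH.
have {}E := f_equal INR E.
rewrite !INR_muln !S_INR !INR_addn in E.
rewrite (_ : INR 0 = 0) in E; last done.
rewrite !INR_muln !S_INR in IH. rewrite !INR_muln !S_INR.
have HC0 := pos_INR c0. have HX0 := pos_INR b0.
move: E IH HZ HD HDZ HC0 HX0. move: (INR b1) (INR b0) (INR c0) (INR z) (INR d) => X' X C0 Z D E IH HZ HD HDZ HC0 HX0.
have HX' : X' = (2*Z+D+1)/(Z+D+1) * X.
  apply (Rmult_eq_reg_l (Z+D+1)); [rewrite E; field; lra | lra].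
have Hr : 2*(1 - (D+1)/(2*Z)) <= (2*Z+D+1)/(Z+D+1).
  have : (D+1)/(Z+D+1) <= (D+1)/Z.
    apply Rmult_le_compat_l; [lra|]. apply Rinv_le_contravar; lra.
  have e1: 2*(1 - (D+1)/(2*Z)) = 2 - (D+1)/Z by field; lra.
  have e2: (2*Z+D+1)/(Z+D+1) = 2 - (D+1)/(Z+D+1) by field; lra.
  lra.
have Hsplit : (D+1)*(D+1+1)/(4*Z) = D*(D+1)/(4*Z) + (D+1)/(2*Z) by field; lra.
rewrite Hsplit HX' (_ : 2 ^ d.+1 = 2 * 2 ^ d); last by simpl.
have HP : 0 <= 2 ^ d * C0 by apply Rmult_le_pos; [apply pow_le; lra | done].
have HS : 0 <= D*(D+1)/(4*Z) by apply Rmult_le_pos; [nra | apply Rlt_le, Rinv_0_lt_compat; lra].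
have Hx : 0 <= (D+1)/(2*Z) by apply Rmult_le_pos; [lra | apply Rlt_le, Rinv_0_lt_compat; lra].
rewrite (_ : 2 * 2 ^ d * C0 = 2 * (2 ^ d * C0)); last ring.
have Hx1 : (D+1)/(2*Z) <= 1 by apply Rle_div_l; lra.
move: IH Hr HS Hx HP Hx1.
move: (D*(D+1)/(4*Z)) ((D+1)/(2*Z)) ((2*Z+D+1)/(Z+D+1)) (2 ^ d * C0) => S x r P IH Hr HS Hx HP Hx1.
case: (Rle_dec 0 (1 - S)) => H1.
- have Hpr : 0 <= P * (1 - S) by nra.
  have : r * (P * (1 - S)) <= r * X by apply Rmult_le_compat_l; [lra | lra].
  have : 2 * (1 - x) * (P * (1 - S)) <= r * (P * (1 - S)) by apply Rmult_le_compat_r.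
  have : 0 <= P * S * x by apply Rmult_le_pos; [apply Rmult_le_pos|]; lra.
  nra.
- have : 0 <= r * X by apply Rmult_le_pos; lra.
  nra.
Qed.
Open Scope R_scope.

Lemma final_real c X C0 Dd F AA nR Z dd J eps P :
 0 < eps -> 2 <= AA -> 0 < Dd -> 0 < F -> 0 <= C0 -> 0 <= dd -> 1 <= 2 * P -> 0 <= c ->
 AA*X <= AA*c + X -> Dd*C0*(1 - dd/(4*Z)) <= X -> dd*J <= AA*(4*Z) -> 4*AA <= J -> AA/eps <= J ->
 1 <= Z -> 2*Z+1 <= nR -> 2*(F*F) <= P*(2*Z+1)*C0^2 ->
 c / (Dd*F*(nR*AA)*4 / (nR * sqrt nR)) >= (AA - 1)/(2*AA*AA * sqrt(2*P)) - eps.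
Proof.
move=> Heps HA HD HF HC0 Hdd HP Hc F1 HBX F2 HJA HJe HZ HZn HW.
have HJ : 0 < J by lra.
have HnR : 0 < nR by lra.
set e := dd/(4*Z).
have He0 : 0 <= e by apply Rmult_le_pos; [lra | apply Rlt_le, Rinv_0_lt_compat; lra].
have HeJ : e <= AA/J.
  rewrite /e. apply Rle_div_l; first lra.
  rewrite /Rdiv Rmult_assoc (Rmult_comm (/ J)) -Rmult_assoc. apply Rle_div_r; first lra.
  lra.
have HAJ1 : AA/J <= 1/4 by apply Rle_div_l; [lra|]; lra.
have HAJe : AA/J <= eps.
  have H := proj1 (Rle_div_l AA J eps Heps) HJe.
  apply Rle_div_l; lra.
have Hs := sqrt_lt_R0 nR HnR.
have Hss := sqrt_sqrt nR (Rlt_le _ _ HnR).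
have HQ1 : 1 <= sqrt (2 * P) by rewrite -sqrt_1; apply sqrt_le_1_alt.
have HQQ := sqrt_sqrt (2 * P) ltac:(lra).
set s := sqrt nR in Hs Hss *. set Q := sqrt (2 * P) in HQ1 HQQ *.
have Hu : 2 * F <= C0 * s * Q.
  have H1 : (2 * F) ^ 2 <= (C0 * s * Q) ^ 2.
    have -> : (C0 * s * Q) ^ 2 = C0 ^ 2 * (s * s) * (Q * Q) by ring.
    rewrite Hss HQQ.
    have : P * (2 * Z + 1) * C0 ^ 2 <= P * nR * C0 ^ 2.
      apply Rmult_le_compat_r; first nra. apply Rmult_le_compat_l; lra.
    nra.
  have H2 : 0 <= C0 * s * Q by apply Rmult_le_pos; [apply Rmult_le_pos|]; lra.
  nra.
have HX : Dd * C0 * (1 - e) <= X by exact HBX.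
have HcX : (AA - 1) / AA * X <= c.
  have -> : (AA - 1) / AA * X = ((AA - 1) * X) / AA by field; lra.
  apply Rle_div_l; first lra. lra.
have HG : Dd * F * (nR * AA) * 4 / (nR * s) = Dd * F * AA * 4 / s by field; lra.
rewrite HG.
have He1 : 0 <= 1 - e by lra.
have Hk1 : 0 <= (AA - 1) / AA by apply Rmult_le_pos; [lra | apply Rlt_le, Rinv_0_lt_compat; lra].
have Hu' : 2 * F / Q <= C0 * s by apply Rle_div_l; lra.
have h1 : (AA - 1) / AA * X * s <= c * s by apply Rmult_le_compat_r; lra.
have h2 : (AA - 1) / AA * (Dd * C0 * (1 - e)) * s <= (AA - 1) / AA * X * s.
  apply Rmult_le_compat_r; [lra | apply Rmult_le_compat_l; lra].
have h3 : (AA - 1) / AA * Dd * (1 - e) * (2 * F / Q) <= (AA - 1) / AA * Dd * (1 - e) * (C0 * s).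
  apply Rmult_le_compat_l; [apply Rmult_le_pos; [apply Rmult_le_pos|]|]; lra.
have E3 : (AA - 1) / AA * (Dd * C0 * (1 - e)) * s = (AA - 1) / AA * Dd * (1 - e) * (C0 * s) by ring.
have HV : (AA - 1) / AA * Dd * (1 - e) * (2 * F / Q) <= c * s by lra.
have HG0 : 0 < Dd * F * AA * 4 by apply Rmult_lt_0_compat; [apply Rmult_lt_0_compat; [apply Rmult_lt_0_compat|]|]; lra.
have E4 : c / (Dd * F * AA * 4 / s) = c * s / (Dd * F * AA * 4) by field; lra.
rewrite E4.
have HT : (AA - 1) / (2 * AA * AA * Q) * (1 - e) <= c * s / (Dd * F * AA * 4).
  apply (proj1 (Rle_div_r _ (c * s) (Dd * F * AA * 4) HG0)).
  have -> : (AA - 1) / (2 * AA * AA * Q) * (1 - e) * (Dd * F * AA * 4) = (AA - 1) / AA * Dd * (1 - e) * (2 * F / Q) by field; lra.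
  exact HV.
have HT1 : (AA - 1) / (2 * AA * AA * Q) <= 1.
  apply Rle_div_l; first nra. nra.
have HT0 : 0 <= (AA - 1) / (2 * AA * AA * Q).
  apply Rmult_le_pos; [lra | apply Rlt_le, Rinv_0_lt_compat; nra].
apply Rle_ge. nra.
Qed.

Close Scope R_scope.

Lemma part2 : forall a : nat, (1 <= a)%N ->
     forall eps : R, (0 < eps)%R ->
     exists M : nat, forall m : nat, (M <= m)%N ->
       let n := (2 ^ m)%N in
       (INR #|C4 n (m + a)| / (2 ^ n / (INR n * sqrt (INR n)))
          >= (2 ^ a - 1) / (2 ^ (2 * a + 1) * sqrt (2 * PI)) - eps)%R.
Proof.
move=> a Ha eps Heps.
have HA0 : (0 < 2 ^ a)%R by apply pow_lt; lra.
have [K [HK1 HK2]] := nfloor_ex (2 ^ a / eps)%R ltac:(apply Rlt_le, Rdiv_lt_0_compat; lra).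
exists (maxn (maxn 10 (4 * expn 2 a)) K.+1) => m Hm n.
have En : n = expn 2 m by rewrite /n expn_pow.
set j := (m + a)%nat.
have Hj10 : (10 <= j)%N by rewrite /j; lia.
have Hj4 : (4 * expn 2 a <= j)%N by rewrite /j; lia.
have HjK : (K.+1 <= j)%N by rewrite /j; lia.
have Hcube := cube j Hj10.
have EA : expn 2 j = (n * expn 2 a)%N by rewrite /j expnD En.
have HA1 : (1 <= expn 2 a)%N by rewrite expn_gt0.
have H16 : (16 * j <= n)%N.
  have : (16 * expn 2 a * j <= j * j * j)%N by nia.
  rewrite EA in Hcube. nia.
have Hm1 : (1 <= m)%N by lia.
set h := expn 2 m.-1.
have Enh : n = (2 * h)%N by rewrite En /h -expnS prednK.
have Ehalf : n./2 = h by rewrite Enh; lia.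
have Ej : j = (m + a)%nat by [].
clearbody n h j.
set A := expn 2 a.
set z := (h - j)%nat. set d := (j - 2)%nat.
have EN : (n - j - 2 = 2 * z + d)%nat by rewrite /z /d; lia.
have Ew : (h - 2 = z + d)%nat by rewrite /z /d; lia.
have Hcard := card_C4 n j ltac:(lia) ltac:(lia).
rewrite Ehalf EN Ew in Hcard.
have Hbp := bin_pow j (2 * z + d - j) (z + d) ltac:(rewrite /z /d; lia).
rewrite (_ : (2 * z + d - j + j = 2 * z + d)%nat) in Hbp; last by rewrite /z /d; lia.
have Ht : ((2 * z + d).+1 - j <= n)%nat by rewrite /z /d; lia.
have Hz1 : (1 <= z)%nat by rewrite /z; lia.
have Hd2z : (d <= 2 * z)%nat by rewrite /z /d; lia.
have HBX := bin_shift_R z d Hz1 Hd2z.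
have HW := wallis z.
move: Hcard Hbp Ht HBX.
move: 'C(2 * z + d, z + d) 'C(2 * z + d - j, z + d) ((2 * z + d).+1 - j)%nat => X Y t Hcard Hbp Ht HBX.
set c := #|C4 n j|.
have F1 : (A * X <= A * c + X)%nat.
  have H1 : (X <= c + t * Y)%nat by lia.
  have H2 : (n * A * (t * Y) <= n * X)%nat.
    have -> : (n * A * (t * Y) = t * (Y * expn 2 j))%nat by rewrite EA mulnC -mulnA.
    exact: leq_mul Ht Hbp.
  have H3 : (n * A * X <= n * A * c + n * X)%nat.
    apply: (leq_trans (leq_mul (leqnn (n * A)) H1)). rewrite mulnDr leq_add2l. exact: H2.
  have Hn0 : (0 < n)%nat by lia.
  rewrite -(leq_pmul2l Hn0) mulnDr !mulnA. exact: H3.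
have F2 : (d * d.+1 * j <= A * (4 * z))%nat.
  have H1 : (d * d.+1 <= j * j)%nat by apply: leq_mul; rewrite /d; lia.
  have H2 : (n <= 4 * z)%nat by rewrite /z; lia.
  rewrite EA in Hcube.
  apply: (leq_trans (leq_mul H1 (leqnn j))). apply: (leq_trans Hcube).
  by rewrite mulnC leq_mul2l H2 orbT.
have Hzn : ((2 * z).+1 <= n)%nat by rewrite /z; lia.
have Hexp : n = (d + 2 * z + j + 2)%nat by rewrite /z /d; lia.
have HAR : INR A = (2 ^ a)%R by rewrite /A INR_expn.
have F1R : (2 ^ a * INR X <= 2 ^ a * INR c + INR X)%R.
  have := le_INR _ _ (ssrnat.leP F1). by rewrite INR_addn !INR_muln HAR.
have F2R : (INR (d * d.+1) * INR j <= 2 ^ a * (4 * INR z))%R.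
  have := le_INR _ _ (ssrnat.leP F2). rewrite !INR_muln HAR. simpl INR. lra.
have HjA : (4 * 2 ^ a <= INR j)%R.
  have := le_INR _ _ (ssrnat.leP Hj4). rewrite INR_muln. rewrite -/A HAR. simpl INR. lra.
have HjK' : (INR K + 1 <= INR j)%R.
  have := le_INR _ _ (ssrnat.leP HjK). rewrite S_INR. done.
have HzR : (1 <= INR z)%R by apply (le_INR 1); lia.
have HznR : (2 * INR z + 1 <= INR n)%R.
  have := le_INR _ _ (ssrnat.leP Hzn). rewrite S_INR INR_muln. simpl INR. lra.
have Hpow : (2 ^ n = 2 ^ d * 4 ^ z * (INR n * 2 ^ a) * 4)%R.
  have E4 : forall k, (2 ^ (2 * k) = 4 ^ k)%R.
    elim => [|k IH]; first by rewrite muln0.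
    rewrite (_ : (2 * k.+1 = (2 * k).+2)%nat); last lia.
    rewrite /= IH. ring.
  rewrite {1}Hexp !pow_add.
  have -> : (4 ^ z = 2 ^ z * 2 ^ z)%R by rewrite -Rpow_mult_distr; f_equal; lra.
  have -> : (2 ^ j = INR n * 2 ^ a)%R by rewrite -HAR -INR_muln -EA INR_expn.
  simpl. ring.
have HnR : (0 < INR n)%R by apply lt_0_INR; lia.
rewrite Hpow.
have -> : (2 ^ (2 * a + 1) = 2 * 2 ^ a * 2 ^ a)%R.
  clear. elim: a => [|k IH]; first by rewrite /=; ring.
  rewrite (_ : (2 * k.+1 + 1 = (2 * k + 1).+2)%nat); last lia.
  rewrite /= in IH *. rewrite IH. ring.
have H16z : (16 ^ z = 4 ^ z * 4 ^ z)%R by rewrite -Rpow_mult_distr; f_equal; lra.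
rewrite H16z in HW.
have HPI := PI2_1.
apply (final_real (INR c) (INR X) (INR 'C(2 * z, z)) (2 ^ d) (4 ^ z) (2 ^ a) (INR n) (INR z) (INR (d * d.+1)) (INR j) eps PI).
all: try done.
all: try lra.
- have : (2 ^ 1 <= 2 ^ a)%R by apply Rle_pow; [lra | apply/ssrnat.leP; lia].
  simpl; lra.
- apply pow_lt; lra.
- apply pow_lt; lra.
- apply pos_INR.
- apply pos_INR.
- apply pos_INR.
Qed.

Theorem theorem8 :
  (forall n k : nat, ~~ odd n -> (1 <= k)%N -> (k <= n./2)%N ->
     balanced_MU (C4 n k))
  /\
  (forall a : nat, (1 <= a)%N ->
     forall eps : R, (0 < eps)%R ->
     exists M : nat, forall m : nat, (M <= m)%N ->
       let n := (2 ^ m)%N in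
       (INR #|C4 n (m + a)| / (2 ^ n / (INR n * sqrt (INR n)))
          >= (2 ^ a - 1) / (2 ^ (2 * a + 1) * sqrt (2 * PI)) - eps)%R).
split; [exact: part1 | exact: part2].
Qed.
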